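(* Let $k\ge4$ be an integer and $\eta\in[\eta_{k+1},\pi/k)$. If $\arg z_{2k-1}\in(0,\eta]$, then $z_{2k}\in\triangle(0,z_0,1)$, $z_{2k+1}\in\triangle(0,z_1,z_0)$, $w_{2k}\in\triangle(1,w_0,a)$ and $w_{2k+1}\in\triangle(1,w_1,w_0)$. If $\arg z_{2k-1}\in(\eta,2\eta]$, then $z_{2k}\in\triangle(0,1,z_{2k-1})$, $z_{2k+1}\in\triangle(0,z_0,1)$, $w_{2k}\in\triangle(1,a,w_{2k-1})$ and $w_{2k+1}\in\triangle(1,w_0,a)$.
   Context: For $\eta\in(0,\pi/3)$ let $a=\frac{e^{-i\eta}}{2\cos\eta}$, $c=\frac{1}{1-|a|^4}$, and for integers $j\ge0$ put $z_j=ca^{j+1}$, $w_j=1-c|a|^2a^j$. $\arg$ takes values in $[0,2\pi)$ (under the hypotheses $\arg z_{2k-1}=2\pi-2k\eta\in(0,2\eta]$). For integers $k\ge1$ let $\Phi_k(\eta)=(1-|a|^4)\sin((k-1)\eta)-|a|^3\sin((k-2)\eta)+|a|^k\sin\eta$; for each $k\ge4$, $\Phi_k$ has a unique zero in $(\pi/k,\pi/(k-1))$, denoted $\eta_k$. $\triangle(u,v,w)$ is the closed solid triangle with vertices $u,v,w$. *)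

(* Defs.v *)
From Stdlib Require Import Reals Lra ClassicalEpsilon.
From Coquelicot Require Import Coquelicot.
Open Scope R_scope.

Definition aa (eta : R) : C :=
  Cdiv (cos eta, - sin eta) (RtoC (2 * cos eta)).

Definition cc (eta : R) : R := 1 / (1 - (Cmod (aa eta)) ^ 4).

Definition zz (eta : R) (j : nat) : C :=
  Cmult (RtoC (cc eta)) (Cpow (aa eta) (S j)).
Definition ww (eta : R) (j : nat) : C :=
  Cminus (RtoC 1)
    (Cmult (RtoC (cc eta * (Cmod (aa eta)) ^ 2)) (Cpow (aa eta) j)).

Definition is_arg (z : C) (theta : R) : Prop :=
  0 <= theta < 2 * PI /\
  z = Cmult (RtoC (Cmod z)) (cos theta, sin theta).

Definition Phi (k : nat) (eta : R) : R :=
  let m := Cmod (aa eta) in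
  (1 - m ^ 4) * sin ((INR k - 1) * eta) - m ^ 3 * sin ((INR k - 2) * eta)
  + m ^ k * sin eta.

(* eta_k : the (unique, for k >= 4) zero of Phi_k in (pi/k, pi/(k-1)) *)
Definition eta_k (k : nat) : R :=
  epsilon (inhabits 0)
    (fun e => PI / INR k < e < PI / (INR k - 1) /\ Phi k e = 0).

Definition in_triangle (p u v w : C) : Prop :=
  exists l1 l2 l3 : R, 0 <= l1 /\ 0 <= l2 /\ 0 <= l3 /\ l1 + l2 + l3 = 1 /\
    p = Cplus (Cplus (Cmult (RtoC l1) u) (Cmult (RtoC l2) v)) (Cmult (RtoC l3) w).

(* Main.v *)
Require Import Defs.
From Stdlib Require Import Reals Lra Lia Psatz.
From Coquelicot Require Import Coquelicot.
Open Scope R_scope.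

Definition pol (rho phi : R) : C := (rho * cos phi, rho * sin phi).

Lemma Cpow_pol rho al n :
  Cpow (pol rho al) n = pol (rho ^ n) (INR n * al).
Proof.
  induction n as [|n IH].
  - unfold pol; simpl. rewrite Rmult_0_l, cos_0, sin_0. unfold RtoC. f_equal; ring.
  - change (Cpow (pol rho al) (S n)) with (Cmult (pol rho al) (Cpow (pol rho al) n)).
    rewrite IH. unfold pol, Cmult; simpl fst; simpl snd.
    rewrite S_INR. replace ((INR n + 1) * al) with (al + INR n * al) by ring.
    rewrite cos_plus, sin_plus. simpl. f_equal; ring.
Qed.

Lemma tri0 (px py bx by' cx cy : R) :
  bx*cy - by'*cx > 0 -> px*cy - py*cx >= 0 -> bx*py - by'*px >= 0 ->
  (bx-px)*(cy-py) - (by'-py)*(cx-px) >= 0 ->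
  in_triangle (px,py) (RtoC 0) (bx,by') (cx,cy).
Proof.
  intros HD H2 H3 H1.
  set (D := bx*cy - by'*cx).
  exists (((bx-px)*(cy-py) - (by'-py)*(cx-px))/D), ((px*cy - py*cx)/D), ((bx*py - by'*px)/D).
  assert (HD' : D <> 0) by (unfold D; lra).
  repeat split.
  - apply Rmult_le_pos; [lra| left; apply Rinv_0_lt_compat; unfold D; lra].
  - apply Rmult_le_pos; [lra| left; apply Rinv_0_lt_compat; unfold D; lra].
  - apply Rmult_le_pos; [lra| left; apply Rinv_0_lt_compat; unfold D; lra].
  - unfold D in *; field; auto.
  - unfold Cplus, Cmult, RtoC; simpl. unfold D in *; f_equal; field; auto.
Qed.

Lemma tri1 (px py bx by' cx cy : R) :
  in_triangle (px,py) (RtoC 0) (bx,by') (cx,cy) ->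
  in_triangle (1-px,-py) (RtoC 1) (1-bx,-by') (1-cx,-cy).
Proof.
  intros (l1 & l2 & l3 & h1 & h2 & h3 & hs & he).
  exists l1, l2, l3. repeat split; auto.
  unfold Cplus, Cmult, RtoC in *; simpl in *.
  injection he as e1 e2. f_equal; nra.
Qed.

Lemma tri_pol rho phi rb be rc ga :
  0 < rb -> 0 < rc -> 0 <= rho ->
  0 < sin (ga - be) -> 0 <= sin (ga - phi) -> 0 <= sin (phi - be) ->
  rb*rc*sin(ga-be) - rb*rho*sin(phi-be) - rho*rc*sin(ga-phi) >= 0 ->
  in_triangle (pol rho phi) (RtoC 0) (pol rb be) (pol rc ga).
Proof.
  intros Hb Hc Hr H1 H2 H3 H4. unfold pol. apply tri0.
  - replace (rb * cos be * (rc * sin ga) - rb * sin be * (rc * cos ga)) with (rb*rc*sin(ga-be))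
      by (rewrite sin_minus; ring).
    apply Rlt_gt, Rmult_lt_0_compat; auto. apply Rmult_lt_0_compat; auto.
  - replace (rho * cos phi * (rc * sin ga) - rho * sin phi * (rc * cos ga)) with (rho*rc*sin(ga-phi))
      by (rewrite sin_minus; ring).
    apply Rle_ge, Rmult_le_pos; auto. apply Rmult_le_pos; lra.
  - replace (rb * cos be * (rho * sin phi) - rb * sin be * (rho * cos phi)) with (rb*rho*sin(phi-be))
      by (rewrite sin_minus; ring).
    apply Rle_ge, Rmult_le_pos; auto. apply Rmult_le_pos; lra.
  - rewrite !sin_minus in H4. nra.
Qed.

Lemma pol_eq rho rho' x y : rho = rho' -> x = y - 2*PI -> pol rho x = pol rho' y.
Proof. intros -> ->. unfold pol. rewrite cos_minus, sin_minus, cos_2PI, sin_2PI. f_equal; ring. Qed.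
Lemma pol_eq0 rho rho' x y : rho = rho' -> x = y -> pol rho x = pol rho' y.
Proof. intros -> ->. reflexivity. Qed.

Definition wpair (rho x : R) : C := (1 - rho * cos x, - (rho * sin x)).
Lemma wpair_eq rho rho' x y : rho = rho' -> x = y - 2*PI -> wpair rho x = wpair rho' y.
Proof. intros -> ->. unfold wpair. rewrite cos_minus, sin_minus, cos_2PI, sin_2PI. f_equal; ring. Qed.
Lemma wpair_eq0 rho rho' x y : rho = rho' -> x = y -> wpair rho x = wpair rho' y.
Proof. intros -> ->. reflexivity. Qed.

Lemma tri_pol' rho phi rb be rc ga A B1 B2 :
  ga - be = A -> ga - phi = B1 -> phi - be = B2 ->
  0 < rb -> 0 < rc -> 0 <= rho ->
  0 < sin A -> 0 <= sin B1 -> 0 <= sin B2 ->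
  rb*rc*sin A - rb*rho*sin B2 - rho*rc*sin B1 >= 0 ->
  in_triangle (pol rho phi) (RtoC 0) (pol rb be) (pol rc ga).
Proof. intros <- <- <-. apply tri_pol. Qed.

Lemma tri1_w rho phi rb be rc ga :
  in_triangle (pol rho phi) (RtoC 0) (pol rb be) (pol rc ga) ->
  in_triangle (wpair rho phi) (RtoC 1) (wpair rb be) (wpair rc ga).
Proof. unfold pol, wpair. apply tri1. Qed.

Lemma typeS X Y Z S s1 s2 : 0 <= s1 <= S -> 0 <= s2 <= S -> 0 <= Y -> 0 <= Z ->
  X - Y - Z >= 0 -> X*S - Y*s1 - Z*s2 >= 0.
Proof. intros. nra. Qed.


Lemma cos_pos (eta : R) (Heta : 0 < eta <= PI/4) : 0 < cos eta.
Proof.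
 pose proof PI_RGT_0. apply cos_gt_0; lra. Qed.

Lemma r_cos (eta : R) (Heta : 0 < eta <= PI/4) : (1 / (2 * cos eta)) * cos eta = 1/2.
Proof.
 pose proof (cos_pos eta Heta). field. lra. Qed.

Lemma r_pos (eta : R) (Heta : 0 < eta <= PI/4) : 0 < (1 / (2 * cos eta)).
Proof.
 pose proof (cos_pos eta Heta). apply Rdiv_lt_0_compat; lra. Qed.

Lemma aa_pol (eta : R) (Heta : 0 < eta <= PI/4) : aa eta = pol (1 / (2 * cos eta)) (- eta).
Proof.

  pose proof (cos_pos eta Heta). unfold aa, pol, Cdiv, Cinv, Cmult, RtoC; simpl.
  rewrite cos_neg, sin_neg. f_equal; field; lra.
Qed.

Lemma Cmod_aa (eta : R) (Heta : 0 < eta <= PI/4) : Cmod (aa eta) = (1 / (2 * cos eta)).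
Proof.

  rewrite (aa_pol eta Heta). unfold Cmod, pol; simpl. set (r := 1 / (2 * cos eta)).
  replace (r * cos (- eta) * (r * cos (- eta) * 1) + r * sin (- eta) * (r * sin (- eta) * 1))
    with (r ^ 2) by (rewrite cos_neg, sin_neg; pose proof (sin2_cos2 eta); unfold Rsqr in *; nra).
  apply sqrt_pow2. unfold r. pose proof (r_pos eta Heta); lra.
Qed.

Lemma zz_pol (eta : R) (Heta : 0 < eta <= PI/4) j : zz eta j = pol (cc eta * (1 / (2 * cos eta)) ^ (S j)) (INR (S j) * - eta).
Proof.

  unfold zz. rewrite (aa_pol eta Heta), Cpow_pol. unfold pol, Cmult, RtoC; cbn [fst snd].
  f_equal; ring.
Qed.

Lemma ww_pol (eta : R) (Heta : 0 < eta <= PI/4) j : ww eta j = wpair (cc eta * (1 / (2 * cos eta)) ^ 2 * (1 / (2 * cos eta)) ^ j) (INR j * - eta).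
Proof.

  unfold ww. rewrite (Cmod_aa eta Heta), (aa_pol eta Heta), Cpow_pol. unfold wpair, pol, Cminus, Cplus, Copp, Cmult, RtoC; cbn [fst snd].
  f_equal; ring.
Qed.

Lemma aa_w (eta : R) (Heta : 0 < eta <= PI/4) : aa eta = wpair (1 / (2 * cos eta)) eta.
Proof.

  rewrite (aa_pol eta Heta). unfold pol, wpair. rewrite cos_neg, sin_neg. rewrite (r_cos eta Heta). f_equal; lra.
Qed.


Lemma sin_mono x y : 0 <= x -> x <= y -> y <= PI/2 -> 0 <= sin x <= sin y.
Proof.
  intros. pose proof PI_RGT_0. split.
  - apply sin_ge_0; lra.
  - apply sin_incr_1; lra.
Qed.

Lemma pow_S x n : x ^ (S n) = x * x ^ n.
Proof. reflexivity. Qed.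

Lemma facts k eta : (4 <= k)%nat -> 0 < eta <= PI/4 ->
  let r := 1 / (2 * cos eta) in
  0 < r /\ r * cos eta = 1/2 /\ r^2 <= 1/2 /\ r^(2*k) <= 1/16 /\
  cc eta = 1 / (1 - r^4) /\ 1 <= cc eta <= 4/3.
Proof.
  intros Hk He r.
  pose proof (r_pos eta He) as Hr. pose proof (r_cos eta He) as Hrc. fold r in Hr, Hrc.
  pose proof (cos_pos eta He) as Hc.
  assert (Hc2 : 1/2 <= cos eta ^ 2).
  { assert (cos (PI/4) <= cos eta).
    { pose proof PI_RGT_0. apply cos_decr_1; lra. }
    rewrite cos_PI4 in H.
    assert (Hs : sqrt 2 * sqrt 2 = 2) by (apply sqrt_sqrt; lra).
    assert (0 < sqrt 2) by (apply sqrt_lt_R0; lra).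
    assert (1 / sqrt 2 * (1 / sqrt 2) = 1/2) by (replace (1/sqrt 2 * (1/sqrt 2)) with (1/(sqrt 2*sqrt 2)) by (field; lra); rewrite Hs; reflexivity).
    assert (0 < 1 / sqrt 2) by (apply Rdiv_lt_0_compat; lra).
    simpl. nra. }
  assert (Hr2 : r^2 <= 1/2).
  { assert (r^2 * (cos eta ^2) = 1/4) by (replace (r^2 * cos eta ^2) with ((r*cos eta)^2) by ring; rewrite Hrc; field).
    nra. }
  assert (Hq : r^(2*k) <= 1/16).
  { rewrite pow_mult. replace k with (4 + (k-4))%nat by lia. rewrite pow_add.
    assert ((r^2)^4 <= (1/2)^4) by (apply pow_incr; split; [nra|lra]).
    assert ((r^2)^(k-4) <= 1^(k-4)) by (apply pow_incr; split; [nra|lra]).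
    rewrite pow1 in H0.
    assert (0 <= (r^2)^(k-4)) by (apply pow_le; nra).
    assert (0 <= (r^2)^4) by (apply pow_le; nra).
    replace ((1/2)^4) with (1/16) in H by field. nra. }
  assert (Hcc : cc eta = 1 / (1 - r^4)) by (unfold cc; rewrite Cmod_aa; auto).
  repeat split; auto.
  - rewrite Hcc. assert (0 <= r^4 <= 1/4) by (split; nra).
    apply (Rmult_le_reg_r (1 - r^4)); [lra|]. field_simplify; lra.
  - rewrite Hcc. assert (0 <= r^4 <= 1/4) by (split; nra).
    apply (Rmult_le_reg_r (1 - r^4)); [lra|]. field_simplify; lra.
Qed.

Lemma INR_2k k : INR (2*k) = 2 * INR k.
Proof. rewrite mult_INR. simpl. ring. Qed.

Lemma arg_id k eta th : (4 <= k)%nat -> 0 < eta <= PI/4 -> INR k * eta < PI ->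
  is_arg (zz eta (2*k-1)) th -> 0 < th <= 2*eta -> th = 2*PI - 2*INR k*eta.
Proof.
  intros Hk He Hke [[h0 h2] Heq] Hth.
  destruct (facts k eta Hk He) as (Hr & Hrc & Hr2 & Hq & Hcc & Hc).
  set (r := 1 / (2 * cos eta)) in *.
  set (R := cc eta * r^(2*k)).
  assert (HR : 0 < R) by (unfold R; apply Rmult_lt_0_compat; [lra| apply pow_lt; lra]).
  set (t0 := 2*PI - 2*INR k*eta).
  assert (E : zz eta (2*k-1) = pol R t0).
  { rewrite zz_pol by auto. apply pol_eq.
    - replace (S (2*k-1)) with (2*k)%nat by lia. reflexivity.
    - replace (S (2*k-1)) with (2*k)%nat by lia. rewrite INR_2k. unfold t0. ring. }
  rewrite E in Heq.
  assert (HM : Cmod (pol R t0) = R).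
  { unfold Cmod, pol; cbn [fst snd].
    replace ((R * cos t0) ^ 2 + (R * sin t0) ^ 2) with (R^2)
      by (pose proof (sin2_cos2 t0); unfold Rsqr in *; nra).
    apply sqrt_pow2; lra. }
  rewrite HM in Heq. unfold pol, Cmult, RtoC in Heq; cbn [fst snd] in Heq.
  injection Heq as e1 e2.
  assert (ec : cos t0 = cos th) by nra.
  assert (es : sin t0 = sin th) by nra.
  pose proof PI_RGT_0.
  assert (Hst : 0 < sin th) by (apply sin_gt_0; lra).
  assert (Hkpos : 0 < INR k) by (apply lt_0_INR; lia).
  assert (0 < t0) by (unfold t0; lra).
  assert (t0 < 2*PI) by (unfold t0; nra).
  assert (t0 <= PI).
  { destruct (Rle_dec t0 PI) as [h|h]; auto.
    pose proof (sin_le_0 t0) as hh. lra. }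
  symmetry. apply cos_inj; lra.
Qed.

Lemma INR_S2k k : INR (S (2*k)) = 2 * INR k + 1.
Proof. rewrite S_INR, INR_2k. ring. Qed.
Lemma INR_SS2k k : INR (S (S (2*k))) = 2 * INR k + 2.
Proof. rewrite S_INR, INR_S2k. ring. Qed.
Lemma INR_2km1 k : (1 <= k)%nat -> INR (2*k-1) = 2 * INR k - 1.
Proof. intros. rewrite minus_INR by lia. rewrite INR_2k. simpl. ring. Qed.

Lemma one_pol : RtoC 1 = pol 1 0.
Proof. unfold pol, RtoC. rewrite cos_0, sin_0. f_equal; ring. Qed.


Lemma typeT r eta th Q : r * cos eta = 1/2 -> 0 <= r -> sin eta <= sin th -> 0 <= cos th ->
  0 <= sin eta -> Q <= 1/2 -> sin th - r * sin (th - eta) - Q * sin eta >= 0.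
Proof.
  intros H1 H2 H3 H4 H5 H6. rewrite sin_minus.
  replace (sin th - r * (sin th * cos eta - cos th * sin eta) - Q * sin eta)
    with (sin th * (1 - r * cos eta) + r * cos th * sin eta - Q * sin eta) by ring.
  rewrite H1. assert (0 <= r * cos th) by nra. nra.
Qed.

Ltac pos := repeat (first [lra | apply Rmult_lt_0_compat | apply Rmult_le_pos]).
Ltac fin K F := match goal with |- ?E >= 0 => replace E with (K*F) by ring;
  apply Rle_ge, Rmult_le_pos; [pos|lra] end.

Theorem lemma6p5 (k : nat) (eta : R) :
  (4 <= k)%nat ->
  eta_k (S k) <= eta < PI / INR k ->
  ((exists th, is_arg (zz eta (2 * k - 1)) th /\ 0 < th <= eta) ->
     in_triangle (zz eta (2 * k)) (RtoC 0) (zz eta 0) (RtoC 1) /\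
     in_triangle (zz eta (2 * k + 1)) (RtoC 0) (zz eta 1) (zz eta 0) /\
     in_triangle (ww eta (2 * k)) (RtoC 1) (ww eta 0) (aa eta) /\
     in_triangle (ww eta (2 * k + 1)) (RtoC 1) (ww eta 1) (ww eta 0)) /\
  ((exists th, is_arg (zz eta (2 * k - 1)) th /\ eta < th <= 2 * eta) ->
     in_triangle (zz eta (2 * k)) (RtoC 0) (RtoC 1) (zz eta (2 * k - 1)) /\
     in_triangle (zz eta (2 * k + 1)) (RtoC 0) (zz eta 0) (RtoC 1) /\
     in_triangle (ww eta (2 * k)) (RtoC 1) (aa eta) (ww eta (2 * k - 1)) /\
     in_triangle (ww eta (2 * k + 1)) (RtoC 1) (ww eta 0) (aa eta)).
Proof.
  intros Hk [_ Hlt].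
  pose proof PI_RGT_0 as HPI.
  assert (Hk4 : 4 <= INR k) by (apply (le_INR 4) in Hk; simpl in Hk; lra).
  assert (Hke : INR k * eta < PI).
  { apply (Rmult_lt_compat_l (INR k)) in Hlt; [|lra].
    replace (INR k * (PI / INR k)) with PI in Hlt by (field; lra). lra. }
  replace (2*k+1)%nat with (S (2*k)) by lia.
  split.
  - intros [th [Harg Hth]].
    assert (He : 0 < eta <= PI/4) by nra.
    pose proof (arg_id k eta th Hk He Hke Harg ltac:(lra)) as Hth0.
    destruct (facts k eta Hk He) as (Hr & Hrc & Hr2 & Hq & Hcc & Hc).
    set (r := 1 / (2 * cos eta)) in *.
    set (q := r^(2*k)) in *.
    set (c := cc eta) in *.
    assert (Hq0 : 0 < q) by (apply pow_lt; lra).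
    assert (Hr1 : r <= 1) by nra.
    assert (Hsa : 0 < sin eta) by (apply sin_gt_0; lra).
    assert (S1 : 0 <= sin (eta - th) <= sin eta) by (apply sin_mono; lra).
    assert (S2 : 0 <= sin th <= sin eta) by (apply sin_mono; lra).
    assert (K1 : 0 <= 1 - c*r*q - q).
    { assert (0 <= c*r <= 4/3) by (split; nra). nra. }
    assert (K2 : 0 <= 1 - r*q - q) by nra.
    rewrite !zz_pol, !ww_pol, aa_w by auto. fold r. fold c.
    rewrite ?INR_SS2k, ?INR_S2k, ?INR_2k, ?pow_S, ?pow_O. fold q.
    change (INR 0) with 0. change (INR 1) with 1. change (INR 2) with (1+1).
    repeat split.
    + rewrite one_pol.
      rewrite (pol_eq _ (c*(r*q)) _ (th - eta)) by (auto; rewrite Hth0; ring).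
      apply (tri_pol' _ _ _ _ _ _ eta (eta - th) th); try lra; try ring; try pos.
      apply typeS; try lra; try pos.
      fin (c*r) (1 - c*r*q - q).
    + rewrite (pol_eq _ (c*(r*(r*q))) _ (th - 2*eta)) by (auto; rewrite Hth0; ring).
      apply (tri_pol' _ _ _ _ _ _ eta (eta - th) th); try lra; try ring; try pos.
      apply typeS; try lra; try pos.
      fin (c*c*r*r*r) (1 - r*q - q).
    + rewrite (wpair_eq _ (c*(r*(r*1))*q) _ th) by (auto; rewrite Hth0; ring).
      apply tri1_w.
      apply (tri_pol' _ _ _ _ _ _ eta (eta - th) th); try lra; try ring; try pos.
      apply typeS; try lra; try pos.
      fin (c*r*r*r) (1 - c*r*q - q).
    + rewrite (wpair_eq _ (c*(r*(r*1))*(r*q)) _ (th - eta)) by (auto; rewrite Hth0; ring).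
      apply tri1_w.
      apply (tri_pol' _ _ _ _ _ _ eta (eta - th) th); try lra; try ring; try pos.
      apply typeS; try lra; try pos.
      fin (c*c*r*r*r*r*r) (1 - r*q - q).
  - intros [th [Harg Hth]].
    assert (He : 0 < eta <= PI/4) by nra.
    pose proof (arg_id k eta th Hk He Hke Harg ltac:(lra)) as Hth0.
    destruct (facts k eta Hk He) as (Hr & Hrc & Hr2 & Hq & Hcc & Hc).
    set (r := 1 / (2 * cos eta)) in *.
    set (p := r^(2*k-1)) in *.
    assert (Hpq : r^(2*k) = r * p).
    { unfold p. replace (2*k)%nat with (S (2*k-1)) at 1 by lia. reflexivity. }
    set (q := r^(2*k)) in *.
    set (c := cc eta) in *.
    assert (Hq0 : 0 < q) by (apply pow_lt; lra).
    assert (Hp0 : 0 < p) by (apply pow_lt; lra).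
    assert (Hr1 : r <= 1) by nra.
    assert (Hsa : 0 < sin eta) by (apply sin_gt_0; lra).
    assert (S1 : 0 <= sin (th - eta) <= sin eta) by (apply sin_mono; lra).
    assert (S2 : 0 <= sin (2*eta - th) <= sin eta) by (apply sin_mono; lra).
    assert (S3 : 0 <= sin eta <= sin th) by (apply sin_mono; lra).
    assert (Hct : 0 <= cos th) by (apply cos_ge_0; lra).
    assert (Hst : 0 < sin th) by (apply sin_gt_0; lra).
    assert (K3 : 0 <= 1 - c*r*r*q - r*q).
    { assert (0 <= c*r <= 4/3) by (split; nra).
      assert (0 <= c*r*r <= 4/3) by (split; nra). nra. }
    assert (K4 : c*r*q <= 1/2).
    { assert (0 <= c*r <= 4/3) by (split; nra). nra. }
    replace (S (2*k-1)) with (2*k)%nat by lia.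
    rewrite !zz_pol, !ww_pol, aa_w by auto. fold r. fold c.
    replace (S (2*k-1)) with (2*k)%nat by lia.
    rewrite ?INR_SS2k, ?INR_S2k, ?INR_2k, ?INR_2km1, ?pow_S, ?pow_O by lia. fold q. fold p.
    change (INR 0) with 0. change (INR 1) with 1. change (INR 2) with (1+1).
    repeat split.
    + rewrite one_pol.
      rewrite (pol_eq _ (c*(r*q)) _ (th - eta)) by (auto; rewrite Hth0; ring).
      rewrite (pol_eq (c*q) (c*q) (2*INR k * - eta) th) by (auto; rewrite Hth0; ring).
      apply (tri_pol' _ _ _ _ _ _ th eta (th - eta)); try lra; try ring; try pos.
      pose proof (typeT r eta th (c*r*q) Hrc ltac:(lra) ltac:(lra) Hct ltac:(lra) K4).
      fin (c*q) (sin th - r * sin (th - eta) - c*r*q * sin eta).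
    + rewrite one_pol.
      rewrite (pol_eq _ (c*(r*(r*q))) _ (th - 2*eta)) by (auto; rewrite Hth0; ring).
      apply (tri_pol' _ _ _ _ _ _ eta (2*eta - th) (th - eta)); try lra; try ring; try pos.
      apply typeS; try lra; try pos.
      fin (c*r) (1 - c*r*r*q - r*q).
    + rewrite (wpair_eq _ (c*(r*(r*1))*q) _ th) by (auto; rewrite Hth0; ring).
      rewrite (wpair_eq (c*(r*(r*1))*p) (c*(r*(r*1))*p) ((2*INR k - 1) * - eta) (th + eta)) by (auto; rewrite Hth0; ring).
      apply tri1_w.
      apply (tri_pol' _ _ _ _ _ _ th eta (th - eta)); try lra; try ring; try pos.
      pose proof (typeT r eta th (c*r*q) Hrc ltac:(lra) ltac:(lra) Hct ltac:(lra) K4).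
      rewrite Hpq in H |- *.
      fin (c*r*r*r*p) (sin th - r * sin (th - eta) - c*r*(r*p) * sin eta).
    + rewrite (wpair_eq _ (c*(r*(r*1))*(r*q)) _ (th - eta)) by (auto; rewrite Hth0; ring).
      apply tri1_w.
      apply (tri_pol' _ _ _ _ _ _ eta (2*eta - th) (th - eta)); try lra; try ring; try pos.
      apply typeS; try lra; try pos.
      fin (c*r*r*r) (1 - c*r*r*q - r*q).
Qed.
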